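(* Let $z_1,z_2,z_3,z_4\in\mathbb{C}$ be the vertices of a convex quadrilateral, labelled in cyclic order around its boundary, and for $j=1,\dots,4$ (indices mod $4$) let $$\alpha_j=\angle z_{j+1}z_jz_{j+2},\qquad \beta_j=\angle z_{j+2}z_jz_{j-1},\qquad \gamma_j=\angle z_{j-1}z_jz_{j+1}.$$ Then $$S_1=\sum_{j=1}^4(\cos\alpha_j+\cos\beta_j+\cos\gamma_j)\ \ge\ 4 .$$
   Context: Angles $\angle XYZ\in[0,\pi]$ denote the usual unsigned angle at $Y$ between the segments $YX$ and $YZ$. *)

(* Defs.v *)
From Stdlib Require Import Reals.
From Coquelicot Require Import Coquelicot.
Open Scope R_scope.

Definition cross (u v : C) : R := fst u * snd v - snd u * fst v.
Definition dot (u v : C) : R := fst u * fst v + snd u * snd v.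

Definition angle (X Y Z : C) : R :=
  acos (dot (X - Y)%C (Z - Y)%C / (Cmod (X - Y)%C * Cmod (Z - Y)%C)).

(* The four vertices, indexed cyclically (index k mod 4; index 0 = z1). *)
Definition vtx (z1 z2 z3 z4 : C) (k : nat) : C :=
  match (k mod 4)%nat with
  | 0%nat => z1 | 1%nat => z2 | 2%nat => z3 | _ => z4
  end.

(* z1 z2 z3 z4 are the vertices of a (non-degenerate) convex quadrilateral,
   listed in cyclic order along its boundary: all consecutive turns are
   strictly in the same direction (all counterclockwise or all clockwise). *)
Definition convex_quad (z1 z2 z3 z4 : C) : Prop :=
  let z := vtx z1 z2 z3 z4 in
  (forall j : nat, (j < 4)%nat ->
     0 < cross (z (S j) - z j)%C (z (S (S j)) - z (S j))%C) \/
  (forall j : nat, (j < 4)%nat ->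
     cross (z (S j) - z j)%C (z (S (S j)) - z (S j))%C < 0).

(* S_1 (with 0-based index j; j-1 is taken as j+3 mod 4). *)
Definition S1 (z1 z2 z3 z4 : C) : R :=
  let z := vtx z1 z2 z3 z4 in
  sum_f_R0 (fun j =>
      cos (angle (z (j + 1)%nat) (z j) (z (j + 2)%nat))
    + cos (angle (z (j + 2)%nat) (z j) (z (j + 3)%nat))
    + cos (angle (z (j + 3)%nat) (z j) (z (j + 1)%nat)))
    3.

(* Main.v *)
Require Import Defs.
From Stdlib Require Import Reals Lra Lia.
From Coquelicot Require Import Coquelicot.
Open Scope R_scope.

Lemma Cmod_sq u : Cmod u * Cmod u = dot u u.
Proof. unfold Cmod, dot. rewrite sqrt_sqrt; [ring | nra]. Qed.

Lemma ratio_bound u v : -1 <= dot u v / (Cmod u * Cmod v) <= 1.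
Proof.
  destruct (Req_dec (Cmod u * Cmod v) 0) as [h|h].
  - rewrite h; unfold Rdiv; rewrite Rinv_0; lra.
  - assert (hu := Cmod_ge_0 u); assert (hv := Cmod_ge_0 v).
    assert (hp : 0 < Cmod u * Cmod v).
    { destruct (Rle_lt_or_eq_dec 0 _ (Rmult_le_pos _ _ hu hv)); auto. congruence. }
    assert (hs : dot u v * dot u v <= (Cmod u * Cmod u) * (Cmod v * Cmod v)).
    { rewrite !Cmod_sq. unfold dot.
      pose proof (pow2_ge_0 (fst u * snd v - snd u * fst v)). nra. }
    set (r := dot u v / (Cmod u * Cmod v)).
    assert (hr : dot u v = r * (Cmod u * Cmod v)) by (unfold r; field; split; intro hz; apply h; rewrite hz; ring).
    replace ((Cmod u * Cmod u) * (Cmod v * Cmod v)) with ((Cmod u * Cmod v) * (Cmod u * Cmod v)) in hs by ring.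
    rewrite hr in hs. set (p := Cmod u * Cmod v) in *.
    assert (hpp : 0 < p * p) by (apply Rmult_lt_0_compat; exact hp).
    assert (h1 : (r*r - 1) * (p*p) <= 0) by (ring_simplify; ring_simplify in hs; lra).
    assert (h2 : r * r <= 1).
    { destruct (Rle_dec (r*r) 1); auto. exfalso. assert (0 < r*r-1) by lra. nra. }
    split; nra.
Qed.

Lemma cos_angle X Y Z : cos (angle X Y Z) = dot (X-Y)%C (Z-Y)%C / (Cmod (X-Y)%C * Cmod (Z-Y)%C).
Proof. unfold angle. apply cos_acos, ratio_bound. Qed.

Lemma Cmod_sub_sym X Y : Cmod (X - Y)%C = Cmod (Y - X)%C.
Proof. destruct X, Y; unfold Cmod; simpl; f_equal; ring. Qed.

Lemma tri_ineq X Y Z : Cmod (X - Z)%C <= Cmod (X - Y)%C + Cmod (Y - Z)%C.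
Proof.
  replace (X - Z)%C with ((X - Y) + (Y - Z))%C. apply Cmod_triangle.
  destruct X, Y, Z; unfold Cminus, Cplus, Copp; simpl; f_equal; ring.
Qed.

Lemma Cmod_pos X Y : X <> Y -> 0 < Cmod (X - Y)%C.
Proof.
  intro H; apply Cmod_gt_0; intro h; apply H.
  assert (e : X = ((X - Y) + Y)%C)
    by (destruct X, Y; unfold Cminus, Cplus, Copp; simpl; f_equal; ring).
  rewrite h, Cplus_0_l in e. exact e.
Qed.

Lemma core a b c d : 0<a->0<b->0<c-> a<=b+c -> b<=a+c -> c<=a+b ->
  a*a = b*b+c*c-2*d ->
  d/(c*b) + (c*c-d)/(c*a) + (b*b-d)/(b*a) >= 1.
Proof.
  intros ha hb hc t1 t2 t3 e.
  assert (hd : d = (b*b+c*c-a*a)/2) by lra. subst d.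
  assert (k : 0 <= (a+b-c)*(b+c-a)*(c+a-b)).
  { apply Rmult_le_pos; [apply Rmult_le_pos|]; lra. }
  replace ((b*b+c*c-a*a)/2/(c*b) + (c*c-(b*b+c*c-a*a)/2)/(c*a)
     + (b*b-(b*b+c*c-a*a)/2)/(b*a))
    with (1 + (a+b-c)*(b+c-a)*(c+a-b) / (2*a*b*c)) by (field; lra).
  assert (0 <= (a+b-c)*(b+c-a)*(c+a-b) / (2*a*b*c)).
  { unfold Rdiv. apply Rmult_le_pos; [lra|]. left; apply Rinv_0_lt_compat.
    assert (0 < a*b) by nra. nra. }
  lra.
Qed.

Lemma tri P Q R : P <> Q -> Q <> R -> P <> R ->
  cos (angle Q P R) + cos (angle P Q R) + cos (angle P R Q) >= 1.
Proof.
  intros h1 h2 h3. rewrite !cos_angle.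
  rewrite (Cmod_sub_sym P Q), (Cmod_sub_sym P R), (Cmod_sub_sym Q R).
  assert (e1 : dot (P - Q)%C (R - Q)%C = dot (Q-P)%C (Q-P)%C - dot (Q-P)%C (R-P)%C)
    by (destruct P, Q, R; unfold dot; simpl; ring).
  assert (e2 : dot (P - R)%C (Q - R)%C = dot (R-P)%C (R-P)%C - dot (Q-P)%C (R-P)%C)
    by (destruct P, Q, R; unfold dot; simpl; ring).
  assert (e3 : dot (R - Q)%C (R - Q)%C = dot (R-P)%C (R-P)%C + dot (Q-P)%C (Q-P)%C
     - 2 * dot (Q-P)%C (R-P)%C)
    by (destruct P, Q, R; unfold dot; simpl; ring).
  rewrite e1, e2, <- !Cmod_sq. rewrite <- !Cmod_sq in e3.
  assert (t1 := tri_ineq R P Q). rewrite (Cmod_sub_sym P Q) in t1.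
  assert (t2 := tri_ineq R Q P).
  assert (t3 := tri_ineq Q R P). rewrite (Cmod_sub_sym Q R) in t3.
  apply core; auto; try lra.
  - apply Cmod_pos; congruence.
  - apply Cmod_pos; congruence.
  - apply Cmod_pos; congruence.
Qed.

Lemma angle_sym X Y Z : angle X Y Z = angle Z Y X.
Proof. unfold angle. rewrite (Rmult_comm (Cmod (X-Y)%C)). f_equal. f_equal. unfold dot; ring. Qed.

Lemma distinct3 a b c : cross (b - a)%C (c - b)%C <> 0 -> a <> b /\ b <> c /\ a <> c.
Proof.
  intro H; repeat split; intro e; subst; apply H; unfold cross; simpl; ring.
Qed.

Theorem corollary1 (z1 z2 z3 z4 : C) :
  convex_quad z1 z2 z3 z4 -> S1 z1 z2 z3 z4 >= 4.
Proof.
  intro H.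
  assert (Hc : forall j, (j < 4)%nat -> cross (vtx z1 z2 z3 z4 (S j) - vtx z1 z2 z3 z4 j)%C
      (vtx z1 z2 z3 z4 (S (S j)) - vtx z1 z2 z3 z4 (S j))%C <> 0).
  { intros j hj. destruct H as [H|H]; specialize (H j hj); simpl in H |- *; lra. }
  destruct (distinct3 _ _ _ (Hc 0%nat ltac:(lia))) as [d12 [d23 d13]].
  destruct (distinct3 _ _ _ (Hc 1%nat ltac:(lia))) as [_ [d34 d24]].
  destruct (distinct3 _ _ _ (Hc 2%nat ltac:(lia))) as [_ [d41 _]].
  unfold S1. simpl.
  unfold vtx in *; simpl in *.
  assert (T1 := tri z1 z2 z3 d12 d23 d13).
  assert (T2 := tri z1 z3 z4 d13 d34 ltac:(congruence)).
  assert (T3 := tri z1 z2 z4 d12 d24 ltac:(congruence)).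
  assert (T4 := tri z2 z3 z4 d23 d34 d24).
  rewrite (angle_sym z1 z3 z4), (angle_sym z1 z4 z3) in T2.
  rewrite (angle_sym z2 z1 z4), (angle_sym z1 z2 z4) in T3.
  lra.
Qed.
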